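(* Let $(V,g)$ be a four-dimensional Lorentzian vector space (signature $(-,+,+,+)$) with a choice of time orientation, and let $F\in\mathrm{Skew}(V)$, $F\neq 0$. Define $\sigma:=-\frac12\mathrm{Tr}(F^2)\in\mathbb{R}$ and $\tau\geq 0$ by $\tau^2:=-4\det F$. Then there exists an orthonormal basis $\{e_0,e_1,e_2,e_3\}$ of $V$ with $e_0$ timelike and future directed such that $$F(e_0)=\left(-1+\tfrac{\sigma}{4}\right)e_2+\tfrac{\tau}{4}e_3,\quad F(e_1)=\left(1+\tfrac{\sigma}{4}\right)e_2+\tfrac{\tau}{4}e_3,$$ $$F(e_2)=\left(-1+\tfrac{\sigma}{4}\right)e_0-\left(1+\tfrac{\sigma}{4}\right)e_1,\quad F(e_3)=\tfrac{\tau}{4}(e_0-e_1).$$ Moreover, if $\tau=0$, the vector $e_3$ of such a basis can be taken to be any spacelike unit vector lying in $\ker F$.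
   Context: $\mathrm{Skew}(V)$ denotes the set of endomorphisms $F:V\to V$ with $\langle e,F(e')\rangle=-\langle F(e),e'\rangle$ for all $e,e'\in V$, where $\langle\cdot,\cdot\rangle$ is the inner product of $g$. Trace and determinant are those of $F$ as an endomorphism. *)

(* Defs.v *)
(* Vectors of V are row vectors 'rV[R]_4; an endomorphism F
   is a 4x4 matrix acting on the right: F(u) = u *m F. *)
From HB Require Import structures.
From mathcomp Require Import all_boot all_order all_algebra.
Set Implicit Arguments. Unset Strict Implicit. Unset Printing Implicit Defensive.
Import Order.TTheory GRing.Theory Num.Theory.
Local Open Scope ring_scope.

Definition i0 : 'I_4 := @Ordinal 4 0 isT.
Definition i1 : 'I_4 := @Ordinal 4 1 isT.
Definition i2 : 'I_4 := @Ordinal 4 2 isT.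
Definition i3 : 'I_4 := @Ordinal 4 3 isT.

Definition ip (R : nzRingType) (G : 'M[R]_4) (u v : 'rV[R]_4) : R :=
  (u *m G *m v^T) 0 0.

Definition minkowski (R : nzRingType) : 'M[R]_4 :=
  \matrix_(i, j) (if i == j then (if i == i0 then -1 else 1) else 0).

Definition lorentzian (R : comUnitRingType) (G : 'M[R]_4) : Prop :=
  G^T = G /\ exists P : 'M[R]_4, P \in unitmx /\ P *m G *m P^T = minkowski R.

Definition skew_sym (R : nzRingType) (G F : 'M[R]_4) : Prop :=
  forall e e' : 'rV[R]_4, ip G e (e' *m F) = - ip G (e *m F) e'.

(* a time orientation is given by a timelike vector t0 (ip G t0 t0 < 0);
   a timelike vector u is future directed iff ip G u t0 < 0 *)
Definition future_directed (R : numDomainType) (G : 'M[R]_4) (t0 u : 'rV[R]_4) : Prop :=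
  ip G u u < 0 /\ ip G u t0 < 0.

Definition orthonormal_basis (R : numFieldType) (G : 'M[R]_4) (e : 'I_4 -> 'rV[R]_4) : Prop :=
  row_free (\matrix_i e i) /\
  forall i j, ip G (e i) (e j) = (if i == j then (if i == i0 then -1 else 1) else 0).

Definition normal_form (R : numFieldType) (F : 'M[R]_4) (sigma tau : R)
    (e : 'I_4 -> 'rV[R]_4) : Prop :=
  [/\ e i0 *m F = (-1 + sigma / 4) *: e i2 + (tau / 4) *: e i3,
      e i1 *m F = (1 + sigma / 4) *: e i2 + (tau / 4) *: e i3,
      e i2 *m F = (-1 + sigma / 4) *: e i0 - (1 + sigma / 4) *: e i1
    & e i3 *m F = (tau / 4) *: (e i0 - e i1)].

(* Main.v *)
Require Import Defs.
From HB Require Import structures.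
From mathcomp Require Import all_boot all_order all_algebra ring lra.
Import Order.TTheory GRing.Theory Num.Theory.
Local Open Scope ring_scope.
Set Implicit Arguments. Unset Strict Implicit.

Lemma ord4P (P : 'I_4 -> Prop) : P i0 -> P i1 -> P i2 -> P i3 -> forall j, P j.
Proof.
move=> H0 H1 H2 H3 [[|[|[|[|j]]]] Hj].
- by rewrite (_ : Ordinal Hj = i0) //; apply: val_inj.
- by rewrite (_ : Ordinal Hj = i1) //; apply: val_inj.
- by rewrite (_ : Ordinal Hj = i2) //; apply: val_inj.
- by rewrite (_ : Ordinal Hj = i3) //; apply: val_inj.
- by [].
Qed.

Lemma sum4 (V : nmodType) (f : 'I_4 -> V) : \sum_j f j = f i0 + f i1 + f i2 + f i3.
Proof.
rewrite !big_ord_recr big_ord0 /= add0r.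
congr (_ + _ + _ + _); congr f; exact: val_inj.
Qed.


Section NF.
Variable R : rcfType.

Definition nfe (s t : R) (i j : nat) : R :=
  let a := -1 + s / 4 in let b := 1 + s / 4 in
  match i, j with
  | 0, 2 => a | 0, 3 => t | 1, 2 => b | 1, 3 => t
  | 2, 0 => a | 2, 1 => - b | 3, 0 => t | 3, 1 => - t
  | _, _ => 0 end.

Definition nfm (s t : R) : 'M[R]_4 := \matrix_(i, j) nfe s t i j.

Lemma det_nfm s t : \det (nfm s t) = - 4 * t ^+ 2.
Proof.
rewrite (expand_det_row _ ord0) !big_ord_recl big_ord0 /cofactor.
rewrite !(expand_det_row _ ord0) !big_ord_recl !big_ord0 /cofactor.
rewrite !(expand_det_row _ ord0) !big_ord_recl !big_ord0 /cofactor.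
rewrite !det_mx11 !mxE /=.
rewrite /nfe /=.
ring.
Qed.

Lemma tr_nfm s t : \tr (nfm s t *m nfm s t) = - 2 * s.
Proof.
rewrite /mxtrace !big_ord_recl big_ord0 !mxE !big_ord_recl !big_ord0 !mxE /= /nfe /=.
by field.
Qed.
Lemma det_mink : \det (minkowski R) = -1.
Proof.
rewrite (expand_det_row _ ord0) !big_ord_recl big_ord0 /cofactor.
rewrite !(expand_det_row _ ord0) !big_ord_recl !big_ord0 /cofactor.
rewrite !(expand_det_row _ ord0) !big_ord_recl !big_ord0 /cofactor.
rewrite !det_mx11 !mxE /=.
ring.
Qed.

Definition gmx (c : R) : 'M[R]_4 :=
  \matrix_(i, j) (if i == j then (if i == i0 then -1 else if i == i3 then c else 1) else 0).

Lemma det_gmx c : \det (gmx c) = - c.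
Proof.
rewrite (expand_det_row _ ord0) !big_ord_recl big_ord0 /cofactor.
rewrite !(expand_det_row _ ord0) !big_ord_recl !big_ord0 /cofactor.
rewrite !(expand_det_row _ ord0) !big_ord_recl !big_ord0 /cofactor.
rewrite !det_mx11 !mxE /=.
ring.
Qed.

End NF.


Section Arith.
Variable R : rcfType.
Lemma ar_lin2 (a b : R) : 1/2 * (a + b) = 0 -> 1/2 * (b - a) = 0 -> a = 0 /\ b = 0.
Proof. by move=> h1 h2; split; lra. Qed.
Lemma ar_scale (q : R) : 0 < q -> 2 / Num.sqrt q * (2 / Num.sqrt q * q) = 4.
Proof.
move=> hq; have hs : Num.sqrt q ^+ 2 = q := sqr_sqrtr (ltW hq).
have hs0 : Num.sqrt q != 0 by rewrite gt_eqF ?sqrtr_gt0.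
set r := Num.sqrt q in hs hs0 *; rewrite -hs; field; exact: hs0.
Qed.
Lemma ar_unit (q : R) : 0 < q -> (Num.sqrt q)^-1 * ((Num.sqrt q)^-1 * q) = 1.
Proof.
move=> hq; have hs : Num.sqrt q ^+ 2 = q := sqr_sqrtr (ltW hq).
have hs0 : Num.sqrt q != 0 by rewrite gt_eqF ?sqrtr_gt0.
set r := Num.sqrt q in hs hs0 *; rewrite -hs; field; exact: hs0.
Qed.
Lemma ar_cpos (d g c : R) : d != 0 -> g < 0 -> d ^+ 2 * g = - c -> 0 < c.
Proof.
move=> hd hg h.
have hd2 : 0 < d ^+ 2 by rewrite lt_def sqrf_eq0 hd sqr_ge0.
have : 0 < d ^+ 2 * (- g) by rewrite mulr_gt0 // oppr_gt0.
by rewrite mulrN h opprK.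
Qed.
Lemma ar_detG (p g : R) : p * g * p = -1 -> g < 0.
Proof.
move=> h; rewrite ltNge; apply/negP => hg.
have : 0 <= p * g * p by rewrite mulrAC -expr2 mulr_ge0 // sqr_ge0.
rewrite h; lra.
Qed.
Lemma ar_tau (tau t : R) : 0 <= tau -> 0 <= t -> tau ^+ 2 = - 4 * (- 4 * t ^+ 2) -> tau = 4 * t.
Proof.
move=> h1 h2 h.
have h' : (tau - 4 * t) * (tau + 4 * t) = 0.
  have e : (tau - 4 * t) * (tau + 4 * t) = tau ^+ 2 - 16 * t ^+ 2 by ring.
  by rewrite e h; ring.
by move/eqP: h'; rewrite mulf_eq0 => /orP[/eqP|/eqP] h3; lra.
Qed.
Lemma ar_sig (sigma s : R) : sigma = - (1 / 2) * (- 2 * s) -> sigma = s.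
Proof. by move=> ->; field. Qed.
End Arith.

Section S.
Variable R : rcfType.
Variable G : 'M[R]_4.
Hypothesis Gsym : G^T = G.

Local Notation ip := (ip G).

Lemma ipC u v : ip u v = ip v u.
Proof.
rewrite /ip -[in LHS](trmxK (u *m G *m v^T)) mxE.
by rewrite !trmx_mul trmxK Gsym mulmxA.
Qed.

Lemma ipDl u v w : ip (u + v) w = ip u w + ip v w.
Proof. by rewrite /ip !mulmxDl mxE. Qed.
Lemma ipZl a u w : ip (a *: u) w = a * ip u w.
Proof. by rewrite /ip -!scalemxAl mxE. Qed.
Lemma ipNl u w : ip (- u) w = - ip u w.
Proof. by rewrite -scaleN1r ipZl mulN1r. Qed.
Lemma ipBl u v w : ip (u - v) w = ip u w - ip v w.
Proof. by rewrite ipDl ipNl. Qed.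
Lemma ipDr u v w : ip w (u + v) = ip w u + ip w v.
Proof. by rewrite ipC ipDl ![ip _ w]ipC. Qed.
Lemma ipZr a u w : ip w (a *: u) = a * ip w u.
Proof. by rewrite ipC ipZl ipC. Qed.
Lemma ipNr u w : ip w (- u) = - ip w u.
Proof. by rewrite ipC ipNl ipC. Qed.
Lemma ipBr u v w : ip w (u - v) = ip w u - ip w v.
Proof. by rewrite ipDr ipNr. Qed.
Lemma ip0l w : ip 0 w = 0.
Proof. by rewrite /ip !mul0mx mxE. Qed.
Lemma ip0r w : ip w 0 = 0.
Proof. by rewrite ipC ip0l. Qed.

Lemma gramE m n (X : 'M[R]_(m, 4)) (Y : 'M[R]_(n, 4)) i j :
  (X *m G *m Y^T) i j = ip (row i X) (row j Y).
Proof.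
rewrite /ip !mxE; apply: eq_bigr => k _; rewrite !mxE; congr (_ * _).
by apply: eq_bigr => l _; rewrite !mxE.
Qed.


Variable F : 'M[R]_4.
Hypothesis Hsk : skew_sym G F.

Lemma ipFswap x y : ip (x *m F) y = - ip (y *m F) x.
Proof. by rewrite -[ip (y *m F) x]ipC Hsk opprK. Qed.

Lemma ipFxx x : ip (x *m F) x = 0.
Proof.
have h := ipFswap x x.
lra.
Qed.

Definition eta (i j : 'I_4) : R := if i == j then (if i == i0 then -1 else 1) else 0.

Definition tup (a b c d : 'rV[R]_4) : 'I_4 -> 'rV[R]_4 :=
  fun i => match val i with 0 => a | 1 => b | 2 => c | _ => d end.


Lemma gram_unit (e : 'I_4 -> 'rV[R]_4) :
  (forall i j, ip (e i) (e j) = eta i j) ->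
  (\matrix_i e i) \in unitmx /\ G \in unitmx.
Proof.
move=> H.
have EG : (\matrix_i e i) *m G *m (\matrix_i e i)^T = minkowski R.
  by apply/matrixP => i j; rewrite gramE !rowK H mxE.
have := congr1 determinant EG; rewrite !det_mulmx det_tr det_mink => h.
rewrite !unitmxE !unitfE; apply/andP; rewrite -negb_or; apply/negP => /orP[] /eqP h0;
  by move: h; rewrite h0 ?mul0r ?mulr0 ?mul0r => /eqP; rewrite eq_sym oppr_eq0 oner_eq0.
Qed.

Lemma nondeg (e : 'I_4 -> 'rV[R]_4) :
  (forall i j, ip (e i) (e j) = eta i j) ->
  forall z, (forall j, ip z (e j) = 0) -> z = 0.
Proof.
move=> H z Hz; have [EU GU] := gram_unit H.
have U : G *m (\matrix_i e i)^T \in unitmx by rewrite unitmx_mul GU unitmx_tr.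
have h0 : z *m (G *m (\matrix_i e i)^T) = 0.
  apply/rowP => j; rewrite mulmxA (gramE z (\matrix_i e i) 0 j) rowK mxE.
  rewrite -(Hz j); congr ip; apply/rowP => k; rewrite !mxE.
  by rewrite (_ : 0 = (ord0 : 'I_1)).
by rewrite -(mulmxK U z) h0 mul0mx.
Qed.

Lemma ip_expand (e : 'I_4 -> 'rV[R]_4) :
  (forall i j, ip (e i) (e j) = eta i j) -> forall x y,
  ip x y = - (ip x (e i0) * ip y (e i0)) + ip x (e i1) * ip y (e i1)
           + ip x (e i2) * ip y (e i2) + ip x (e i3) * ip y (e i3).
Proof.
move=> H x y.
have hx : x = (- ip x (e i0)) *: e i0 + ip x (e i1) *: e i1
              + ip x (e i2) *: e i2 + ip x (e i3) *: e i3.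
  apply/eqP; rewrite -subr_eq0; apply/eqP; apply: (nondeg H).
  apply: ord4P; rewrite !ipBl !ipDl !ipZl !H /eta /=; ring.
rewrite {1}hx !ipDl !ipZl ![ip (e _) y]ipC; ring.
Qed.

Lemma q4 (t : R) : (4 * t) / 4 = t.
Proof. by field. Qed.

Lemma nf_table (e0 e1 e2 e3 : 'rV[R]_4) (s t : R) :
 ip e0 e0 = -1 -> ip e1 e1 = 1 -> ip e2 e2 = 1 -> ip e3 e3 = 1 ->
 ip e0 e1 = 0 -> ip e0 e2 = 0 -> ip e0 e3 = 0 -> ip e1 e2 = 0 ->
 ip e1 e3 = 0 -> ip e2 e3 = 0 ->
 ip (e0 *m F) e1 = 0 -> ip (e0 *m F) e2 = -1 + s / 4 -> ip (e0 *m F) e3 = t ->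
 ip (e1 *m F) e2 = 1 + s / 4 -> ip (e1 *m F) e3 = t -> ip (e2 *m F) e3 = 0 ->
 (forall i j, ip (tup e0 e1 e2 e3 i) (tup e0 e1 e2 e3 j) = eta i j) /\
 normal_form F s (4 * t) (tup e0 e1 e2 e3).
Proof.
move=> g00 g11 g22 g33 g01 g02 g03 g12 g13 g23 f01 f02 f03 f12 f13 f23.
have g10 := g01; rewrite ipC in g10. have g20 := g02; rewrite ipC in g20.
have g30 := g03; rewrite ipC in g30. have g21 := g12; rewrite ipC in g21.
have g31 := g13; rewrite ipC in g31. have g32 := g23; rewrite ipC in g32.
have f10 : ip (e1 *m F) e0 = 0 by rewrite ipFswap f01 oppr0.
have f20 : ip (e2 *m F) e0 = 1 - s / 4 by rewrite ipFswap f02 opprD opprK.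
have f30 : ip (e3 *m F) e0 = - t by rewrite ipFswap f03.
have f21 : ip (e2 *m F) e1 = - (1 + s / 4) by rewrite ipFswap f12.
have f31 : ip (e3 *m F) e1 = - t by rewrite ipFswap f13.
have f32 : ip (e3 *m F) e2 = 0 by rewrite ipFswap f23 oppr0.
have f00 := ipFxx e0. have f11 := ipFxx e1. have f22 := ipFxx e2. have f33 := ipFxx e3.
have Hg : forall i j, ip (tup e0 e1 e2 e3 i) (tup e0 e1 e2 e3 j) = eta i j.
  by apply: ord4P; apply: ord4P; rewrite /tup /eta /=.
split=> //; rewrite /normal_form q4 /tup /=.
split; apply/eqP; rewrite -subr_eq0; apply/eqP; apply: (nondeg Hg);
  apply: ord4P; rewrite /tup /= ?mulmxBl ?mulmxDl ?(ipBl, ipDl, ipZl, ipNl)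
    ?(g00, g11, g22, g33, g01, g02, g03, g12, g13, g23, g10, g20, g30, g21, g31, g32)
    ?(f00, f11, f22, f33, f01, f02, f03, f12, f13, f23, f10, f20, f30, f21, f31, f32);
  ring.
Qed.


Lemma ipQ n (w : 'rV[R]_4) (Y : 'M[R]_(n, 4)) j :
  (w *m G *m Y^T) 0 j = ip w (row j Y).
Proof.
rewrite gramE; congr ip; apply/rowP => k; rewrite !mxE.
by rewrite (_ : 0 = (ord0 : 'I_1)).
Qed.

Lemma inj_unit (B : 'M[R]_4) : (forall x : 'rV_4, x *m B = 0 -> x = 0) -> B \in unitmx.
Proof.
move=> H; rewrite -row_free_unit -kermx_eq0; apply/eqP/row_matrixP => i.
by rewrite row0; apply: H; rewrite -row_mul mulmx_ker row0.
Qed.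


Lemma gram_det (B : 'I_4 -> 'rV[R]_4) c :
  (forall i j, ip (B i) (B j) = gmx c i j) ->
  \det (\matrix_i B i) ^+ 2 * \det G = - c.
Proof.
move=> H.
have EG : (\matrix_i B i) *m G *m (\matrix_i B i)^T = gmx c.
  by apply/matrixP => i j; rewrite gramE !rowK H.
have := congr1 determinant EG; rewrite !det_mulmx det_tr det_gmx => <-.
by rewrite expr2 mulrAC.
Qed.

Lemma nf_mat s t (e : 'I_4 -> 'rV[R]_4) :
  normal_form F s t e -> (\matrix_i e i) *m F = nfm s (t / 4) *m (\matrix_i e i).
Proof.
case=> h0 h1 h2 h3; apply/row_matrixP; apply: ord4P;
  rewrite !row_mul rowK [row _ (nfm _ _) *m _]mulmx_sum_row sum4 !rowK !mxE /nfe /=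
    ?h0 ?h1 ?h2 ?h3 ?scale0r ?add0r ?addr0 ?scaleNr ?scalerBr //.
Qed.

Lemma sigma_tau s t (e : 'I_4 -> 'rV[R]_4) :
  (forall i j, ip (e i) (e j) = eta i j) -> normal_form F s t e ->
  \tr (F *m F) = - 2 * s /\ \det F = - 4 * (t / 4) ^+ 2.
Proof.
move=> Hg Hnf; have [EU _] := gram_unit Hg; have h := nf_mat Hnf.
set E := \matrix_i e i in EU h.
split.
  have hF : F = invmx E *m nfm s (t / 4) *m E by rewrite -mulmxA -h mulKmx.
  rewrite hF -!mulmxA (mulmxA E (invmx E)) mulmxV // mul1mx.
  by rewrite mxtrace_mulC -!mulmxA mulmxV // mulmx1 tr_nfm.
have := congr1 determinant h; rewrite !det_mulmx det_nfm mulrC => /mulIf.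
by apply; rewrite -unitfE -unitmxE.
Qed.

Lemma fut_ne0 (e : 'I_4 -> 'rV[R]_4) t0 :
  (forall i j, ip (e i) (e j) = eta i j) -> ip t0 t0 < 0 -> ip (e i0) t0 != 0.
Proof.
move=> Hg Ht; apply/eqP => h0; move: Ht; rewrite (ip_expand Hg) ipC h0.
by rewrite mul0r oppr0 add0r ltNge -!expr2 !addr_ge0 ?sqr_ge0.
Qed.

Lemma transport s t (e : 'I_4 -> 'rV[R]_4) (T : 'M[R]_4) :
  (forall x y : 'rV[R]_4, ip (x *m T) (y *m T) = ip x y) ->
  (forall x : 'rV[R]_4, x *m T *m F = x *m F *m T) ->
  (forall i j, ip (e i) (e j) = eta i j) -> normal_form F s t e ->
  (forall i j, ip (e i *m T) (e j *m T) = eta i j) /\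
  normal_form F s t (fun i => e i *m T).
Proof.
move=> HT HTF Hg [h0 h1 h2 h3]; split; first by move=> i j; rewrite HT.
split; rewrite HTF ?h0 ?h1 ?h2 ?h3.
all: by rewrite ?mulmxBl ?mulmxDl ?mulNmx -!scalemxAl ?mulmxBl.
Qed.

Definition refl (w : 'rV[R]_4) : 'M[R]_4 := 1%:M - (2 / ip w w) *: (G *m w^T *m w).

Lemma reflE w x : x *m refl w = x - (2 * ip x w / ip w w) *: w.
Proof.
rewrite /refl mulmxBr mulmx1 -scalemxAr !mulmxA.
rewrite [x *m G *m w^T]mx11_scalar mul_scalar_mx scalerA.
by rewrite -/(ip x w) mulrAC.
Qed.

Lemma refl_iso w : ip w w != 0 -> forall x y : 'rV[R]_4, ip (x *m refl w) (y *m refl w) = ip x y.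
Proof.
move=> hw x y; rewrite !reflE !ipBl !ipBr !ipZl !ipZr ?(ipC w x) ?(ipC w y) ?(ipC y w).
by field.
Qed.

Lemma refl_comm w : w *m F = 0 -> forall x : 'rV[R]_4, x *m refl w *m F = x *m F *m refl w.
Proof.
move=> hwF x; rewrite !reflE mulmxBl -scalemxAl hwF scaler0 subr0.
by rewrite ipFswap hwF ip0l oppr0 mulr0 mul0r scale0r subr0.
Qed.

Definition negT : 'M[R]_4 := - 1%:M.

Lemma negTE (x : 'rV[R]_4) : x *m negT = - x.
Proof. by rewrite /negT mulmxN mulmx1. Qed.

Lemma negT_iso (x y : 'rV[R]_4) : ip (x *m negT) (y *m negT) = ip x y.
Proof. by rewrite !negTE ipNl ipNr opprK. Qed.

Lemma negT_comm (x : 'rV[R]_4) : x *m negT *m F = x *m F *m negT.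
Proof. by rewrite !negTE mulNmx. Qed.


Lemma cfacts (k e2 l e0 e1 : 'rV[R]_4) (s : R) :
  ip k k = 0 -> ip (k *m F) (k *m F) = 4 ->
  e2 = (-1/2) *: (k *m F) -> s = ip (e2 *m F) (e2 *m F) ->
  l = (s / 4) *: k - e2 *m F -> e0 = (1/2) *: (k + l) -> e1 = (1/2) *: (l - k) ->
  [/\ ip e0 e0 = -1, ip e1 e1 = 1, ip e2 e2 = 1 & [/\ ip e0 e1 = 0, ip e0 e2 = 0 & ip e1 e2 = 0]] /\
  [/\ ip (e0 *m F) e1 = 0, ip (e0 *m F) e2 = -1 + s / 4, ip (e1 *m F) e2 = 1 + s / 4 &
      forall x, ip e0 x = 0 -> ip e1 x = 0 -> ip e2 x = 0 ->
        ip (e1 *m F) x = ip (e0 *m F) x /\ ip (e2 *m F) x = 0].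
Proof.
move=> kk kF4 He2 Hs Hl He0 He1.
have h2 : (-2 : R) * (-1/2) = 1 by field.
have kF : k *m F = (-2) *: e2 by rewrite He2 scalerA h2 scale1r.
have e2F : e2 *m F = (s/4) *: k - l by rewrite Hl opprB addrC subrK.
have ke2 : ip k e2 = 0 by rewrite He2 ipZr ipC ipFxx mulr0.
have e2e2 : ip e2 e2 = 1 by rewrite He2 ipZl ipZr kF4; field.
have kFe2 : ip (k *m F) e2 = -2 by rewrite kF ipZl e2e2 mulr1.
have ke2F : ip k (e2 *m F) = 2 by rewrite Hsk kFe2 opprK.
have e2Fk : ip (e2 *m F) k = 2 by rewrite ipC ke2F.
have kl : ip k l = -2 by rewrite Hl ipBr ipZr kk mulr0 sub0r ke2F.
have lk : ip l k = -2 by rewrite ipC kl.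
have le2 : ip l e2 = 0 by rewrite Hl ipBl ipZl ke2 mulr0 ipFxx subr0.
have ll : ip l l = 0.
  by rewrite Hl !ipBl !ipBr !ipZl !ipZr kk e2Fk ke2F -Hs; field.
have kFl : ip (k *m F) l = 0 by rewrite kF ipZl ipC le2 mulr0.
have lFe2 : ip (l *m F) e2 = s / 2.
  by rewrite ipFswap e2F ipBl ipZl kl ll; field.
have lFk : ip (l *m F) k = 0 by rewrite ipFswap kFl oppr0.
have kFk := ipFxx k. have lFl := ipFxx l.
have e0F : e0 *m F = (1/2) *: (k *m F + l *m F) by rewrite He0 -scalemxAl mulmxDl.
have e1F : e1 *m F = (1/2) *: (l *m F - k *m F) by rewrite He1 -scalemxAl mulmxBl.
split.
  split; last split; by rewrite ?He0 ?He1 ?(ipZl, ipZr, ipBl, ipBr, ipDl, ipDr, ipNl, ipNr)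
    ?(kk, kl, lk, ll, ke2, le2, e2e2); field.
split.
- by rewrite e0F He1 ?(ipZl, ipZr, ipBl, ipBr, ipDl, ipDr, ipNl, ipNr) kFk kFl lFk lFl; field.
- by rewrite e0F ?(ipZl, ipZr, ipBl, ipBr, ipDl, ipDr, ipNl, ipNr) kFe2 lFe2; field.
- by rewrite e1F ?(ipZl, ipZr, ipBl, ipBr, ipDl, ipDr, ipNl, ipNr) kFe2 lFe2; field.
move=> x h0 h1 h3.
have [kx lx] : ip k x = 0 /\ ip l x = 0.
  by apply: ar_lin2; [move: h0 | move: h1]; rewrite ?He0 ?He1 ?ipZl ?ipBl ?ipDl.
have kFx : ip (k *m F) x = 0 by rewrite kF ipZl h3 mulr0.
split; first by rewrite e1F e0F !ipZl ipBl ipDl kFx subr0 add0r.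
by rewrite e2F ipBl ipZl kx lx mulr0 subr0.
Qed.

Lemma finish (k e2 l e0 e1 e3 : 'rV[R]_4) (s : R) :
  ip k k = 0 -> ip (k *m F) (k *m F) = 4 ->
  e2 = (-1/2) *: (k *m F) -> s = ip (e2 *m F) (e2 *m F) ->
  l = (s / 4) *: k - e2 *m F -> e0 = (1/2) *: (k + l) -> e1 = (1/2) *: (l - k) ->
  ip e3 e3 = 1 -> ip e0 e3 = 0 -> ip e1 e3 = 0 -> ip e2 e3 = 0 ->
  (forall i j, ip (tup e0 e1 e2 e3 i) (tup e0 e1 e2 e3 j) = eta i j) /\
  normal_form F s (4 * ip (e0 *m F) e3) (tup e0 e1 e2 e3).
Proof.
move=> kk kF4 He2 Hs Hl He0 He1 h33 h03 h13 h23.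
have [[g00 g11 g22 [g01 g02 g12]] [f01 f02 f12 hx]] := cfacts kk kF4 He2 Hs Hl He0 He1.
have [f13 f23] := hx e3 h03 h13 h23.
by apply: nf_table.
Qed.

Lemma find_k (P : 'M[R]_4) : P *m G *m P^T = minkowski R -> F != 0 ->
  exists k, ip k k = 0 /\ 0 < ip (k *m F) (k *m F).
Proof.
move=> HP HF.
pose f i := row i P.
have Hf : forall i j, ip (f i) (f j) = eta i j by move=> i j; rewrite /f -gramE HP mxE.
have HH i : ip (f i *m F) (f i *m F) =
   - (ip (f i *m F) (f i0) * ip (f i *m F) (f i0)) + ip (f i *m F) (f i1) * ip (f i *m F) (f i1)
   + ip (f i *m F) (f i2) * ip (f i *m F) (f i2) + ip (f i *m F) (f i3) * ip (f i *m F) (f i3).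
  exact: ip_expand.
have step a : a != i0 -> (exists k, ip k k = 0 /\ 0 < ip (k *m F) (k *m F)) \/
    ip (f i0 *m F) (f i0 *m F) + ip (f a *m F) (f a *m F) <= 0.
  move=> ha.
  have n1 : ip (f i0 + f a) (f i0 + f a) = 0.
    rewrite !ipDl !ipDr !Hf /eta !eqxx (negbTE ha) eq_sym (negbTE ha) /=; lra.
  have n2 : ip (f i0 - f a) (f i0 - f a) = 0.
    rewrite !ipBl !ipBr !Hf /eta !eqxx (negbTE ha) eq_sym (negbTE ha) /=; lra.
  have [h|h] := ltP 0 (ip ((f i0 + f a) *m F) ((f i0 + f a) *m F)).
    by left; exists (f i0 + f a).
  have [h'|h'] := ltP 0 (ip ((f i0 - f a) *m F) ((f i0 - f a) *m F)).
    by left; exists (f i0 - f a).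
  right; move: h h'.
  rewrite mulmxDl mulmxBl !ipBl !ipBr !ipDl !ipDr (ipC (f a *m F) (f i0 *m F)).
  lra.
case: (step i1 isT) => [//|s1]; case: (step i2 isT) => [//|s2].
case: (step i3 isT) => [//|s3].
exfalso; move: HF; apply/negP; rewrite negbK.
rewrite !HH in s1 s2 s3.
rewrite !ipFxx in s1 s2 s3.
rewrite [ip (f i1 *m F) (f i0)]ipFswap [ip (f i2 *m F) (f i0)]ipFswap
  [ip (f i3 *m F) (f i0)]ipFswap [ip (f i2 *m F) (f i1)]ipFswap
  [ip (f i3 *m F) (f i1)]ipFswap [ip (f i3 *m F) (f i2)]ipFswap in s1 s2 s3.
set a01 := ip (f i0 *m F) (f i1) in s1 s2 s3.
set a02 := ip (f i0 *m F) (f i2) in s1 s2 s3.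
set a03 := ip (f i0 *m F) (f i3) in s1 s2 s3.
set a12 := ip (f i1 *m F) (f i2) in s1 s2 s3.
set a13 := ip (f i1 *m F) (f i3) in s1 s2 s3.
set a23 := ip (f i2 *m F) (f i3) in s1 s2 s3.
have sq (x : R) : 0 <= x * x by rewrite -expr2 sqr_ge0.
have sq0 (x : R) : x * x <= 0 -> x = 0.
  by move=> hx; apply/eqP; rewrite -sqrf_eq0 expr2 eq_le hx sq.
have z01 : a01 = 0.
  by apply: sq0; move: (sq a02) (sq a03) (sq a12) (sq a13) (sq a23) s1 s2 s3; lra.
have z02 : a02 = 0.
  by apply: sq0; move: (sq a01) (sq a03) (sq a12) (sq a13) (sq a23) s1 s2 s3; lra.
have z03 : a03 = 0.
  by apply: sq0; move: (sq a01) (sq a02) (sq a12) (sq a13) (sq a23) s1 s2 s3; lra.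
have z12 : a12 = 0.
  by apply: sq0; move: (sq a01) (sq a02) (sq a03) (sq a13) (sq a23) s1 s2 s3; lra.
have z13 : a13 = 0.
  by apply: sq0; move: (sq a01) (sq a02) (sq a03) (sq a12) (sq a23) s1 s2 s3; lra.
have z23 : a23 = 0.
  by apply: sq0; move: (sq a01) (sq a02) (sq a03) (sq a12) (sq a13) s1 s2 s3; lra.
have A0 : forall i j, ip (f i *m F) (f j) = 0.
  apply: ord4P; apply: ord4P; rewrite ?ipFxx //;
  rewrite -/a01 -/a02 -/a03 -/a12 -/a13 -/a23 ?z01 ?z02 ?z03 ?z12 ?z13 ?z23 //;
  rewrite ipFswap -/a01 -/a02 -/a03 -/a12 -/a13 -/a23 ?z01 ?z02 ?z03 ?z12 ?z13 ?z23 ?oppr0 //.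
have fF i : f i *m F = 0 by apply: (nondeg Hf) => j; exact: A0.
have PF : P *m F = 0 by apply/row_matrixP => i; rewrite row_mul row0; exact: fF.
have [PU _] := gram_unit Hf.
have EP : \matrix_i f i = P by apply/row_matrixP => i; rewrite rowK.
rewrite EP in PU; apply/eqP.
by rewrite -(mulKmx PU F) PF mulmx0.
Qed.

Lemma core (P : 'M[R]_4) : P *m G *m P^T = minkowski R -> F != 0 ->
  exists e : 'I_4 -> 'rV[R]_4, exists s t : R,
    (forall i j, ip (e i) (e j) = eta i j) /\ normal_form F s (4 * t) e /\ 0 <= t.
Proof.
move=> HP HF.
have [k0 [k0k0 q0]] := find_k HP HF.
pose k := (2 / Num.sqrt (ip (k0 *m F) (k0 *m F))) *: k0.
have kk : ip k k = 0 by rewrite /k ipZl ipZr k0k0 !mulr0.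
have kF4 : ip (k *m F) (k *m F) = 4 by rewrite /k -scalemxAl ipZl ipZr ar_scale.
pose e2 := (-1/2) *: (k *m F).
pose s := ip (e2 *m F) (e2 *m F).
pose l := (s / 4) *: k - e2 *m F.
pose e0 := (1/2) *: (k + l).
pose e1 := (1/2) *: (l - k).
have Ee2 : e2 = (-1/2) *: (k *m F) by [].
have Es : s = ip (e2 *m F) (e2 *m F) by [].
have El : l = (s / 4) *: k - e2 *m F by [].
have Ee0 : e0 = (1/2) *: (k + l) by [].
have Ee1 : e1 = (1/2) *: (l - k) by [].
clearbody e1 e0 l s e2 k.
have [[g00 g11 g22 [g01 g02 g12]] _] := cfacts kk kF4 Ee2 Es El Ee0 Ee1.
pose C3 : 'M[R]_(3, 4) :=
  \matrix_(j < 3) (if val j == 0%N then e0 else if val j == 1%N then e1 else e2).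
pose Q := G *m C3^T.
have [w [w0 wQ]] : exists w : 'rV[R]_4, w != 0 /\ w *m Q = 0.
  have hr : (0 < \rank (kermx Q))%N.
    by rewrite mxrank_ker subn_gt0 (leq_ltn_trans (rank_leq_col Q)).
  have [r hr'] : exists r, row r (kermx Q) != 0.
    case: (pickP (fun r => row r (kermx Q) != 0)) => [r hr'|hn]; first by exists r.
    suff h0 : kermx Q = 0 by move: hr; rewrite h0 mxrank0.
    by apply/row_matrixP => r; rewrite row0; move/negbFE/eqP: (hn r).
  exists (row r (kermx Q)); split => //.
  by rewrite -row_mul mulmx_ker row0.
have hw j : ip w (row j C3) = 0 by rewrite -ipQ -mulmxA wQ mxE.
have e0w : ip e0 w = 0 by move: (hw (@Ordinal 3 0 isT)); rewrite rowK /= ipC.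
have e1w : ip e1 w = 0 by move: (hw (@Ordinal 3 1 isT)); rewrite rowK /= ipC.
have e2w : ip e2 w = 0 by move: (hw (@Ordinal 3 2 isT)); rewrite rowK /= ipC.
have we0 : ip w e0 = 0 by rewrite ipC.
have we1 : ip w e1 = 0 by rewrite ipC.
have we2 : ip w e2 = 0 by rewrite ipC.
have g10 : ip e1 e0 = 0 by rewrite ipC.
have g20 : ip e2 e0 = 0 by rewrite ipC.
have g21 : ip e2 e1 = 0 by rewrite ipC.
pose B := tup e0 e1 e2 w.
have BU : (\matrix_i B i) \in unitmx.
  apply: inj_unit => x.
  rewrite mulmx_sum_row sum4 !rowK /B /tup /= => hx.
  have h0 : x 0 i0 = 0.
    have := congr1 (fun z => ip z e0) hx.
    by rewrite /= !ipDl !ipZl ip0l g00 g10 g20 we0; lra.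
  have h1 : x 0 i1 = 0.
    have := congr1 (fun z => ip z e1) hx.
    by rewrite /= !ipDl !ipZl ip0l g01 g11 g21 we1; lra.
  have h2 : x 0 i2 = 0.
    have := congr1 (fun z => ip z e2) hx.
    by rewrite /= !ipDl !ipZl ip0l g02 g12 g22 we2; lra.
  move: hx; rewrite h0 h1 h2 !scale0r !add0r => /eqP; rewrite scaler_eq0 (negbTE w0) orbF.
  move=> /eqP h3; apply/rowP; apply: ord4P; rewrite mxE ?ord1 //.
have Bg : forall i j, ip (B i) (B j) = gmx (ip w w) i j.
  by apply: ord4P; apply: ord4P; rewrite /B /tup /gmx mxE /=
    ?(g00, g11, g22, g01, g02, g12, g10, g20, g21, we0, we1, we2, e0w, e1w, e2w).
have cpos : 0 < ip w w.
  apply: (ar_cpos _ _ (gram_det Bg)); first by rewrite -unitfE -unitmxE.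
  by have := congr1 determinant HP; rewrite !det_mulmx det_tr det_mink => /ar_detG.
pose e3 := (Num.sqrt (ip w w))^-1 *: w.
have h33 : ip e3 e3 = 1 by rewrite /e3 ipZl ipZr ar_unit.
have h03 : ip e0 e3 = 0 by rewrite /e3 ipZr e0w mulr0.
have h13 : ip e1 e3 = 0 by rewrite /e3 ipZr e1w mulr0.
have h23 : ip e2 e3 = 0 by rewrite /e3 ipZr e2w mulr0.
case: (leP 0 (ip (e0 *m F) e3)) => hsg.
  have [Hg Hnf] := finish kk kF4 Ee2 Es El Ee0 Ee1
     h33 h03 h13 h23.
  by exists (tup e0 e1 e2 e3), s, (ip (e0 *m F) e3).
have h33' : ip (- e3) (- e3) = 1 by rewrite ipNl ipNr opprK.
have h03' : ip e0 (- e3) = 0 by rewrite ipNr h03 oppr0.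
have h13' : ip e1 (- e3) = 0 by rewrite ipNr h13 oppr0.
have h23' : ip e2 (- e3) = 0 by rewrite ipNr h23 oppr0.
have [Hg Hnf] := finish kk kF4 Ee2 Es El Ee0 Ee1
     h33' h03' h13' h23'.
exists (tup e0 e1 e2 (- e3)), s, (ip (e0 *m F) (- e3)); split => //; split => //.
by rewrite ipNr oppr_ge0 ltW.
Qed.

End S.

Lemma comb2 (R : rcfType) (v : 'rV[R]_4) (a : R) : a = -2 -> - v - a *: v = v.
Proof. by move->; rewrite scaleNr opprK scaler_nat mulr2n addKr. Qed.

Lemma comb3 (R : rcfType) (v : 'rV[R]_4) (a : R) : a = 2 -> - (v - a *: v) = v.
Proof. by move->; rewrite scaler_nat mulr2n opprB addrK. Qed.

Unset Implicit Arguments.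

Theorem proposition2p2 (R : rcfType) (G : 'M[R]_4) (t0 : 'rV[R]_4)
    (F : 'M[R]_4) (sigma tau : R) :
  lorentzian G -> ip G t0 t0 < 0 ->
  skew_sym G F -> F != 0 ->
  sigma = - (1 / 2) * \tr (F *m F) ->
  0 <= tau -> tau ^+ 2 = - 4 * \det F ->
  (exists e : 'I_4 -> 'rV[R]_4,
     [/\ orthonormal_basis G e, future_directed G t0 (e i0)
       & normal_form F sigma tau e]) /\
  (tau = 0 -> forall v : 'rV[R]_4, ip G v v = 1 -> v *m F = 0 ->
     exists e : 'I_4 -> 'rV[R]_4,
       [/\ orthonormal_basis G e, future_directed G t0 (e i0),
           normal_form F sigma tau e & e i3 = v]).
Proof.
move=> [Gsym [P [PU HP]]] Ht0 Hsk HF Hsig Htau Htau2.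
have [e0 [s [t [Hg0 [Hnf0 Ht]]]]] := core Gsym Hsk HP HF.
have [htr hdet] := sigma_tau Hg0 Hnf0.
rewrite q4 in hdet.
have Es : sigma = s by apply: ar_sig; rewrite Hsig htr.
have Et : tau = 4 * t by apply: ar_tau => //; rewrite Htau2 hdet.
clear Hsig Htau2; subst sigma tau.
have ortho : forall e, (forall i j, ip G (e i) (e j) = eta R i j) -> orthonormal_basis G e.
  move=> e Hg; split; last exact: Hg.
  by rewrite row_free_unit; case: (gram_unit Hg).
have fut : forall e, (forall i j, ip G (e i) (e j) = eta R i j) ->
    ip G (e i0) t0 < 0 -> future_directed G t0 (e i0).
  move=> e Hg h; split => //; rewrite Hg /eta /=; lra.
split.
  have hne := fut_ne0 Gsym Hg0 Ht0.
  case: (ltP (ip G (e0 i0) t0) 0) => hsg.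
    by exists e0; split; [exact: ortho | exact: fut | exact: Hnf0].
  have [Hg1 Hnf1] := @transport R G F s (4 * t) e0 (negT R) (negT_iso Gsym) (negT_comm F) Hg0 Hnf0.
  exists (fun i => e0 i *m negT R); split; [exact: ortho | apply: (fut (fun i => e0 i *m negT R)) => // | exact: Hnf1].
  by rewrite negTE ipNl oppr_lt0 lt_def hne hsg.
move=> tau0 v hv hvF.
have t0' : t = 0 by lra.
have e3F : e0 i3 *m F = 0 by case: Hnf0 => _ _ _ ->; rewrite q4 t0' scale0r.
have vv : ip G v v != 0 by rewrite hv oner_eq0.
have g33 : ip G (e0 i3) (e0 i3) = 1 by rewrite Hg0.
have [e' [Hg' [Hnf' He3]]] : exists e' : 'I_4 -> 'rV[R]_4,
    (forall i j, ip G (e' i) (e' j) = eta R i j) /\ normal_form F s (4 * t) e' /\ e' i3 = v.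
  set p := ip G (e0 i3) v.
  have vp : ip G v (e0 i3) = p by rewrite (ipC Gsym).
  case: (eqVneq p (-1)) => hp.
    pose w := e0 i3 - v.
    have ww : ip G w w = 4.
      by rewrite /w ipBl !(ipBr Gsym) g33 hv -/p vp hp; lra.
    have wF : w *m F = 0 by rewrite /w mulmxBl e3F hvF subr0.
    have hw : ip G w w != 0 by rewrite ww pnatr_eq0.
    have [Hg1 Hnf1] := transport (refl_iso Gsym hw) (refl_comm Gsym Hsk wF) Hg0 Hnf0.
    exists (fun i => e0 i *m refl G w); split => //; split => //.
    rewrite reflE ww {2}/w (ipBr Gsym) g33 -/p hp.
    rewrite (_ : 2 * (1 - -1) / 4 = 1); last by field.
    by rewrite scale1r /w opprB addrC subrK.
  pose w := e0 i3 + v.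
  have ww : ip G w w = 2 + 2 * p.
    by rewrite /w ipDl !(ipDr Gsym) g33 hv -/p vp; lra.
  have hw : ip G w w != 0.
    by rewrite ww; apply/eqP => h; move/eqP: hp; apply; lra.
  have wF : w *m F = 0 by rewrite /w mulmxDl e3F hvF addr0.
  have [Hg1 Hnf1] := transport (refl_iso Gsym hw) (refl_comm Gsym Hsk wF) Hg0 Hnf0.
  have [Hg2 Hnf2] := transport (refl_iso Gsym vv) (refl_comm Gsym Hsk hvF) Hg1 Hnf1.
  exists (fun i => e0 i *m refl G w *m refl G v); split => //; split => //.
  have h1 : e0 i3 *m refl G w = - v.
    have hw' : 2 + 2 * p != 0 by rewrite -ww.
    rewrite reflE ww {2}/w (ipDr Gsym) g33 -/p.
    rewrite (_ : 2 * (1 + p) / (2 + 2 * p) = 1); last by field.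
    by rewrite scale1r /w opprD addrA subrr add0r.
  by rewrite h1 reflE ipNl hv; apply: comb2; field.
case: (ltP (ip G (e' i0) t0) 0) => hsg.
  by exists e'; split; [exact: ortho | exact: fut | exact: Hnf' | exact: He3].
have hne := fut_ne0 Gsym Hg' Ht0.
have [Hg2 Hnf2] := transport (refl_iso Gsym vv) (refl_comm Gsym Hsk hvF) Hg' Hnf'.
have [Hg3 Hnf3] := transport (negT_iso Gsym) (negT_comm F) Hg2 Hnf2.
exists (fun i => e' i *m refl G v *m negT R); split; [exact: ortho | apply: (fut (fun i => e' i *m refl G v *m negT R)) => // | exact: Hnf3 | ].
  rewrite negTE reflE -He3 Hg' /eta /= mulr0 mul0r scale0r subr0.
  by rewrite ipNl oppr_lt0 lt_def hne hsg.
by rewrite He3 reflE hv negTE; apply: comb3; field.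
Qed.
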